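(* Let $K$ be a field, $\boldsymbol{\lambda}=(\lambda_1,\dots,\lambda_n)$ a vector of positive integers, and $\Lambda=\langle 1/\lambda_1,\dots,1/\lambda_n\rangle$ the additive submonoid of $\mathbb{Q}_{\ge}$ generated by $1/\lambda_1,\dots,1/\lambda_n$. If $I(\boldsymbol{\lambda})\subseteq K[x_1,\dots,x_n]$ is normal, then $\Lambda$ is quasinormal.
   Context: $I(\boldsymbol{\lambda})$ is the integral closure in $K[x_1,\dots,x_n]$ of $(x_1^{\lambda_1},\dots,x_n^{\lambda_n})$; an ideal is normal if all its positive powers are integrally closed. A submonoid $S$ of the nonnegative rationals $\mathbb{Q}_{\ge}$ is quasinormal if whenever $x\in S$ and $x\ge p$ for a positive integer $p$, there exist $y_1,\dots,y_p\in S$ with $y_i\ge1$ for all $i$ and $x=y_1+\cdots+y_p$. *)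

(* Defs.v *)
From mathcomp Require Import all_boot all_order all_algebra.
From mathcomp Require Import mpoly.
Set Implicit Arguments. Unset Strict Implicit. Unset Printing Implicit Defensive.
Import Order.TTheory GRing.Theory Num.Theory.
Local Open Scope ring_scope.

Section IdealDefs.
Variables (R : comNzRingType).

Definition subsetR := R -> Prop.

Definition ideal_gen (S : subsetR) : subsetR :=
  fun f => exists s : seq (R * R),
      (forall c, c \in s -> S c.2) /\ f = \sum_(c <- s) c.1 * c.2.

Definition ideal_mul (I J : subsetR) : subsetR :=
  ideal_gen (fun f => exists a b, I a /\ J b /\ f = a * b).

Fixpoint ideal_pow (I : subsetR) (k : nat) : subsetR :=
  match k with
  | 0 => ideal_gen (fun f => f = 1)
  | k'.+1 => ideal_mul (ideal_pow I k') I
  end.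

Definition integral_over_ideal (I : subsetR) (f : R) : Prop :=
  exists (m : nat) (a : nat -> R), (0 < m)%N /\
    (forall i, (1 <= i <= m)%N -> ideal_pow I i (a i)) /\
    f ^+ m + \sum_(1 <= i < m.+1) a i * f ^+ (m - i) = 0.

Definition integral_closure (I : subsetR) : subsetR := integral_over_ideal I.

Definition integrally_closed (I : subsetR) : Prop :=
  forall f, integral_closure I f -> I f.

Definition normal_ideal (I : subsetR) : Prop :=
  forall k : nat, (0 < k)%N -> integrally_closed (ideal_pow I k).

End IdealDefs.

Definition I_lambda (K : fieldType) (n : nat) (lam : 'I_n -> nat) : subsetR {mpoly K[n]} :=
  integral_closure (ideal_gen (fun f : {mpoly K[n]} => exists i : 'I_n, f = 'X_i ^+ lam i)).

Arguments I_lambda K {n} lam.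

Definition Lambda_mon (n : nat) (lam : 'I_n -> nat) : rat -> Prop :=
  fun x => exists c : 'I_n -> nat, x = \sum_(i < n) (c i)%:R / (lam i)%:R.

Definition quasinormal (S : rat -> Prop) : Prop :=
  forall (x : rat) (p : nat), S x -> (0 < p)%N -> (p%:R <= x) ->
    exists y : 'I_p -> rat,
      (forall i, S (y i) /\ 1 <= y i) /\ x = \sum_(i < p) y i.

(* Main.v *)
Require Import Defs.
From mathcomp Require Import all_boot all_order all_algebra.
From mathcomp Require Import mpoly.
From mathcomp Require Import zify ring lra.
Set Implicit Arguments. Unset Strict Implicit. Unset Printing Implicit Defensive.
Import Order.TTheory GRing.Theory Num.Theory.
Local Open Scope ring_scope.
Section Ideals.
Variable R : comNzRingType.
Implicit Types (S T I : subsetR R) (f g : R).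

Lemma gen_sub S f : S f -> ideal_gen S f.
Proof.
move=> Sf; exists [:: (1, f)]; split; last by rewrite big_seq1 mul1r.
by move=> c; rewrite inE => /eqP ->.
Qed.

Lemma gen0 S : ideal_gen S 0.
Proof. by exists [::]; split => //; rewrite big_nil. Qed.

Lemma genD S f g : ideal_gen S f -> ideal_gen S g -> ideal_gen S (f + g).
Proof.
move=> [s1 [h1 ->]] [s2 [h2 ->]]; exists (s1 ++ s2); split; last by rewrite big_cat.
by move=> c; rewrite mem_cat => /orP [/h1|/h2].
Qed.

Lemma genM S r f : ideal_gen S f -> ideal_gen S (r * f).
Proof.
move=> [s [h ->]]; exists (map (fun c => (r * c.1, c.2)) s); split.
  by move=> c /mapP [c' /h ? ->].
by rewrite big_map mulr_sumr; apply: eq_bigr => c _; rewrite mulrA.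
Qed.

Lemma genN S f : ideal_gen S f -> ideal_gen S (- f).
Proof. by move=> h; rewrite -mulN1r; apply: genM. Qed.

Lemma gen_sum S (J : eqType) (s : seq J) (F : J -> R) :
  (forall j, j \in s -> ideal_gen S (F j)) -> ideal_gen S (\sum_(j <- s) F j).
Proof.
elim: s => [|j s IH] h; first by rewrite big_nil; apply: gen0.
rewrite big_cons; apply: genD; first by apply: h; rewrite inE eqxx.
by apply: IH => j' hj; apply: h; rewrite inE hj orbT.
Qed.

Lemma gen_gen S T f : (forall g, S g -> ideal_gen T g) -> ideal_gen S f -> ideal_gen T f.
Proof.
move=> hST [s [h ->]]; apply: gen_sum => c /h Sc; apply: genM; exact: hST.
Qed.

Lemma gen_mull S a f : ideal_gen S f ->
  ideal_gen (fun g => exists s, S s /\ g = a * s) (a * f).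
Proof.
move=> [s [h ->]]; rewrite mulr_sumr; apply: gen_sum => c /h Sc.
rewrite mulrCA; apply: genM; apply: gen_sub; by exists c.2.
Qed.

Lemma pow_gen I k : ideal_pow I k = ideal_gen (match k with
  | 0 => (fun f => f = 1) | k'.+1 => (fun f => exists a b, ideal_pow I k' a /\ I b /\ f = a * b) end).
Proof. by case: k. Qed.

Lemma pow0 I k : ideal_pow I k 0.
Proof. by rewrite pow_gen; apply: gen0. Qed.
Lemma powD I k f g : ideal_pow I k f -> ideal_pow I k g -> ideal_pow I k (f + g).
Proof. by rewrite pow_gen; apply: genD. Qed.
Lemma powM I k r f : ideal_pow I k f -> ideal_pow I k (r * f).
Proof. by rewrite pow_gen; apply: genM. Qed.
Lemma powN I k f : ideal_pow I k f -> ideal_pow I k (- f).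
Proof. by rewrite pow_gen; apply: genN. Qed.
Lemma pow_one I : ideal_pow I 0 1.
Proof. exact: gen_sub. Qed.
Lemma pow_mulS I k a b : ideal_pow I k a -> I b -> ideal_pow I k.+1 (a * b).
Proof. by move=> ha hb; apply: gen_sub; exists a, b. Qed.

Lemma pow_S_sub I k f : ideal_pow I k.+1 f -> ideal_pow I k f.
Proof.
rewrite [ideal_pow I k]pow_gen; apply: gen_gen => g [a [b [ha [hb ->]]]].
by rewrite mulrC -pow_gen; apply: powM.
Qed.

Lemma pow_le I k l f : (k <= l)%N -> ideal_pow I l f -> ideal_pow I k f.
Proof.
move=> /subnK <-; elim: (l - k)%N => [//|j IH] h.
by apply: IH; apply: pow_S_sub; rewrite -addSn.
Qed.

Lemma pow_mul I k l a b : ideal_pow I k a -> ideal_pow I l b -> ideal_pow I (k + l) (a * b).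
Proof.
move=> ha; elim: l b => [|l IH] b.
  rewrite addn0 /= => /(gen_mull a); rewrite [ideal_pow I k]pow_gen; apply: gen_gen.
  by move=> g [s [-> ->]]; rewrite mulr1 -pow_gen.
rewrite addnS /= => /(gen_mull a); apply: gen_gen => g [s [[x [y [hx [hy ->]]]] ->]].
by apply: gen_sub; exists (a * x), y; split; [apply: IH | split; [|rewrite mulrA]].
Qed.

Lemma pow_exp I k g : I g -> ideal_pow I k (g ^+ k).
Proof.
move=> hg; elim: k => [|k IH]; first by rewrite expr0; apply: pow_one.
by rewrite exprSr; apply: pow_mulS.
Qed.

Lemma pow_split I a b f : ideal_pow I (a + b) f ->
  ideal_gen (fun g => exists x y, ideal_pow I a x /\ ideal_pow I b y /\ g = x * y) f.
Proof.
elim: b f => [|b IH] f.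
  by rewrite addn0 => hf; apply: gen_sub; exists f, 1; rewrite mulr1; split => //; split => //; apply: pow_one.
rewrite addnS /=; apply: gen_gen => g [x [y [hx [hy ->]]]].
move: (IH _ hx) => [s [hs ->]]; rewrite mulr_suml; apply: gen_sum => c /hs [u [v [hu [hv ->]]]].
rewrite -mulrA -mulrA; apply: genM; apply: gen_sub; exists u, (v * y); split => //; split => //.
by apply: pow_mulS.
Qed.

Lemma pow_pow I p M f : ideal_pow I (p * M) f -> ideal_pow (ideal_pow I p) M f.
Proof.
elim: M f => [|M IH] f; first by rewrite muln0.
rewrite mulnS addnC => /pow_split; rewrite [ideal_pow _ M.+1]pow_gen; apply: gen_gen.
move=> g [x [y [hx [hy ->]]]]; apply: gen_sub; exists x, y; split => //; exact: IH.
Qed.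

Lemma pow_prod I (J : Type) (s : seq J) (F : J -> R) (k : J -> nat) :
  (forall j, ideal_pow I (k j) (F j)) -> ideal_pow I (\sum_(j <- s) k j)%N (\prod_(j <- s) F j).
Proof.
move=> h; elim: s => [|j s IH]; first by rewrite !big_nil; apply: pow_one.
by rewrite !big_cons; apply: pow_mul.
Qed.

End Ideals.
Section MP.
Variables (K : fieldType) (n : nat).
Implicit Types (f g h : {mpoly K[n]}) (P Q : 'X_{1..n} -> Prop).

Definition Ow P f := forall e, e \in msupp f -> P e.

Lemma Ow0 P : Ow P 0.
Proof. by move=> e; rewrite mcoeff_msupp mcoeff0 eqxx. Qed.

Lemma OwD P f g : Ow P f -> Ow P g -> Ow P (f + g).
Proof. by move=> hf hg e /msuppD_le; rewrite mem_cat => /orP [/hf|/hg]. Qed.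

Lemma OwN P f : Ow P f -> Ow P (- f).
Proof. by move=> hf e; rewrite mcoeff_msupp mcoeffN oppr_eq0 -mcoeff_msupp => /hf. Qed.

Lemma Ow_sum P (J : eqType) (s : seq J) (F : J -> {mpoly K[n]}) :
  (forall j, j \in s -> Ow P (F j)) -> Ow P (\sum_(j <- s) F j).
Proof.
elim: s => [|j s IH] h; first by rewrite big_nil; apply: Ow0.
rewrite big_cons; apply: OwD; first by apply: h; rewrite inE eqxx.
by apply: IH => j' hj; apply: h; rewrite inE hj orbT.
Qed.

Lemma OwM P Q f g : Ow P f -> Ow Q g ->
  Ow (fun e => exists e1 e2, P e1 /\ Q e2 /\ e = (e1 + e2)%MM) (f * g).
Proof.
move=> hf hg e /msuppM_le /allpairsP [[e1 e2] /= [h1 h2 ->]].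
by exists e1, e2; split; [apply: hf | split; [apply: hg|]].
Qed.

Lemma Ow_weak P Q f : (forall e, P e -> Q e) -> Ow P f -> Ow Q f.
Proof. by move=> hPQ hf e /hf /hPQ. Qed.

Lemma OwT f : Ow (fun _ => True) f.
Proof. by []. Qed.

Lemma OwZX P c e : (c != 0 -> P e) -> Ow P (c *: 'X_[e]).
Proof.
have [->|nz] := eqVneq c 0; first by rewrite scale0r => _; apply: Ow0.
by move=> /(_ isT) Pe e' /msuppZ_le; rewrite msuppX mem_seq1 => /eqP ->.
Qed.

Lemma OwX P e : P e -> Ow P 'X_[e].
Proof. by move=> Pe e'; rewrite msuppX mem_seq1 => /eqP ->. Qed.

Lemma Ow_gen P S f : (forall e e', P e -> P (e + e')%MM) ->
  (forall g, S g -> Ow P g) -> ideal_gen S f -> Ow P f.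
Proof.
move=> up hS [s [hs ->]]; apply: Ow_sum => c /hs /hS hc.
apply: (Ow_weak _ (OwM (@OwT c.1) hc)) => e [e1 [e2 [_ [h2 ->]]]].
by rewrite addmC; apply: up.
Qed.

Variable wt : 'I_n -> nat.
Definition W (e : 'X_{1..n}) := (\sum_(i < n) e i * wt i)%N.

Lemma W_add e1 e2 : W (e1 + e2)%MM = (W e1 + W e2)%N.
Proof. by rewrite /W -big_split; apply: eq_bigr => i _; rewrite mnmDE mulnDl. Qed.

Lemma W_muln e k : W (e *+ k)%MM = (k * W e)%N.
Proof.
by rewrite /W big_distrr; apply: eq_bigr => i _ /=; rewrite mulmnE mulnCA mulnA mulnC mulnA.
Qed.

Lemma W_U i : W U_(i)%MM = wt i.
Proof.
rewrite /W (bigD1 i) //= mnm1E eqxx mul1n big1 ?addn0 // => j /negbTE.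
by rewrite mnm1E eq_sym => ->.
Qed.

Definition Ge t e : Prop := (t <= W e)%N.

Lemma OwMGe a b f g : Ow (Ge a) f -> Ow (Ge b) g -> Ow (Ge (a + b)) (f * g).
Proof.
move=> hf hg; apply: Ow_weak (OwM hf hg) => e [e1 [e2 [h1 [h2 ->]]]].
by rewrite /Ge W_add; apply: leq_add.
Qed.

Lemma Ow_exp t k g : Ow (Ge t) g -> Ow (Ge (k * t)) (g ^+ k).
Proof.
move=> hg; elim: k => [|k IH]; first by rewrite expr0 => e _; rewrite /Ge mul0n.
by rewrite exprSr mulSnr; apply: OwMGe.
Qed.

Arguments Ow_exp [t] k [g].

Lemma Ge_up t e e' : Ge t e -> Ge t (e + e')%MM.
Proof. by rewrite /Ge W_add => h; apply: leq_trans h (leq_addr _ _). Qed.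

Lemma Ow_pow m (I : subsetR {mpoly K[n]}) : (forall g, I g -> Ow (Ge m) g) ->
  forall k f, ideal_pow I k f -> Ow (Ge (k * m)) f.
Proof.
move=> hI; elim=> [|k IH] f /=.
  by apply: Ow_gen => // g _ e _; rewrite /Ge mul0n.
apply: Ow_gen; first by move=> e e'; apply: Ge_up.
by move=> g [a [b [ha [hb ->]]]]; rewrite mulSnr; apply: OwMGe; [apply: IH | apply: hI].
Qed.

Lemma order_integral (m : nat) (I : subsetR {mpoly K[n]}) f :
  (forall g, I g -> Ow (Ge m) g) -> integral_over_ideal I f -> Ow (Ge m) f.
Proof.
move=> hI [M [a [M0 [ha eq]]]].
have hpow i : (1 <= i <= M)%N -> Ow (Ge (i * m)) (a i).
  by move=> /ha; apply: Ow_pow.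
move=> e0 he0; rewrite /Ge; case: (leqP m (W e0)) => // lt.
pose Pd d := has (fun e => W e == d) (msupp f).
have exP : exists d, Pd d by exists (W e0); apply/hasP; exists e0.
case: (ex_minnP exP) => d /hasP [e1 e1in /eqP We1] dmin.
have fd : Ow (Ge d) f.
  by move=> e he; apply: dmin; apply/hasP; exists e.
have ltdm : (d < m)%N by apply: leq_ltn_trans (fd _ he0) lt.
pose h := \sum_(e <- msupp f) (if W e == d then f@_e else 0) *: 'X_[e].
pose r := \sum_(e <- msupp f) (if W e == d then 0 else f@_e) *: 'X_[e].
have fhr : f = h + r.
  rewrite {1}(mpolyE f) /h /r -big_split; apply: eq_bigr => e _.
  by case: (W e == d); rewrite /= scale0r ?addr0 ?add0r.
have hh : Ow (fun e => W e = d) h.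
  by apply: Ow_sum => e _; apply: OwZX; case: (boolP (W e == d)) => [/eqP //|_]; rewrite eqxx.
have hr : Ow (Ge d.+1) r.
  apply: Ow_sum => e he; apply: OwZX; case: (boolP (W e == d)) => [_|ne _]; first by rewrite eqxx.
  by rewrite /Ge ltn_neqAle eq_sym ne; apply: fd.
have h0 : h != 0.
  apply/negP => /eqP h0; move: e1in; rewrite fhr h0 add0r => /hr.
  by rewrite /Ge We1 ltnn.
have hdh : Ow (Ge d) h by move=> e /hh; rewrite /Ge => ->.
have hpowk k : exists r', f ^+ k = h ^+ k + r' /\ Ow (Ge (k * d).+1) r'.
  elim: k => [|k [r' [eqk hr']]]; first by exists 0; rewrite addr0; split => //; apply: Ow0.
  exists (h ^+ k * r + r' * h + r' * r); split.
    by rewrite exprSr eqk fhr exprSr; ring.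
  apply: OwD; first apply: OwD.
  - apply: Ow_weak (OwMGe (Ow_exp k hdh) hr) => e; rewrite /Ge => H.
    by apply: leq_trans H; rewrite mulSn addnC addnS.
  - apply: Ow_weak (OwMGe hr' hdh) => e; rewrite /Ge => H.
    by apply: leq_trans H; rewrite mulSn addnC.
  - apply: Ow_weak (OwMGe hr' hr) => e; rewrite /Ge => H.
    apply: leq_trans H; rewrite mulSn; lia.
case: (hpowk M) => r' [eqM hr'].
pose E := (mlead h *+ M)%MM.
have WE : W E = (M * d)%N by rewrite W_muln (hh _ (mlead_supp h0)).
have coefE : (f ^+ M)@_E != 0.
  rewrite eqM mcoeffD mleadcX.
  have -> : r'@_E = 0.
    apply/eqP; rewrite mcoeff_eq0; apply/negP => /hr'; rewrite /Ge WE ltnn //.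
  by rewrite addr0 expf_neq0 // mleadc_eq0.
move/eqP: eq; rewrite addr_eq0 => /eqP eqS.
have OwS : Ow (Ge (M * d).+1) (\sum_(1 <= i < M.+1) a i * f ^+ (M - i)).
  apply: Ow_sum => i; rewrite mem_index_iota => hi.
  apply: Ow_weak (OwMGe (hpow i hi) (Ow_exp (M - i) fd)) => e; rewrite /Ge => H.
  apply: leq_trans H; move: hi => /andP [h1 h2].
  have -> : M = (i + (M - i))%N by lia.
  by rewrite addKn mulnDl ltn_add2r ltn_pmul2l.
move: coefE; rewrite -mcoeff_msupp eqS => /(OwN OwS).
by rewrite /Ge WE ltnn.
Qed.

End MP.
Section Main.
Variables (K : fieldType) (n : nat) (lam : 'I_n -> nat).
Hypothesis hlam : forall i, (0 < lam i)%N.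

Let Mlam := (\prod_(i < n) lam i)%N.
Let wt i := (Mlam %/ lam i)%N.

Lemma Mlam_gt0 : (0 < Mlam)%N.
Proof. exact: prodn_gt0. Qed.

Lemma lam_wt i : (lam i * wt i)%N = Mlam.
Proof.
rewrite mulnC divnK //; rewrite /Mlam (bigD1 i) //=; apply: dvdn_mulr; apply: dvdnn.
Qed.

Let J := ideal_gen (fun f : {mpoly K[n]} => exists i : 'I_n, f = 'X_i ^+ lam i).

Lemma J_ge g : J g -> Ow (Ge wt Mlam) g.
Proof.
apply: Ow_gen; first by move=> e e'; apply: Ge_up.
move=> f [i ->]; rewrite mpolyXn; apply: OwX.
by rewrite /Ge W_muln W_U lam_wt.
Qed.

Lemma Ilam_ge g : I_lambda K lam g -> Ow (Ge wt Mlam) g.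
Proof. exact: order_integral J_ge. Qed.

Definition val (e : 'X_{1..n}) : rat := \sum_(i < n) (e i)%:R / (lam i)%:R.

Lemma val_W e : (W wt e)%:R = val e * Mlam%:R.
Proof.
rewrite /W natr_sum /val mulr_suml; apply: eq_bigr => i _.
have hd : (lam i %| Mlam)%N by rewrite -(lam_wt i) dvdn_mulr.
rewrite natrM /wt natr_div //; last by rewrite unitfE pnatr_eq0 -lt0n hlam.
by rewrite mulrA mulrAC.
Qed.

Let Lam := Lambda_mon lam.

Lemma Lam0 : Lam 0.
Proof. by exists (fun _ => 0%N); rewrite big1 // => i _; rewrite mul0r. Qed.

Lemma LamD x y : Lam x -> Lam y -> Lam (x + y).
Proof.
move=> [c1 ->] [c2 ->]; exists (fun i => c1 i + c2 i)%N.
by rewrite -big_split; apply: eq_bigr => i _; rewrite natrD mulrDl.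
Qed.

Lemma Lam_val e : Lam (val e).
Proof. by exists (fun i => e i). Qed.

Lemma Lam_ge0 x : Lam x -> 0 <= x.
Proof. by move=> [c ->]; apply: sumr_ge0 => i _; apply: divr_ge0; apply: ler0n. Qed.

Lemma val_add e1 e2 : val (e1 + e2)%MM = val e1 + val e2.
Proof. by rewrite /val -big_split; apply: eq_bigr => i _; rewrite mnmDE natrD mulrDl. Qed.

Definition Good (k : nat) (e : 'X_{1..n}) : Prop :=
  exists s : seq rat, size s = k /\ (forall y, y \in s -> Lam y /\ 1 <= y) /\
    exists z, Lam z /\ val e = z + \sum_(y <- s) y.

Lemma Good_up k e e' : Good k e -> Good k (e + e')%MM.
Proof.
move=> [s [hs [hy [z [hz E]]]]]; exists s; split => //; split => //.
exists (z + val e'); split; first by apply: LamD => //; apply: Lam_val.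
by rewrite val_add E addrAC.
Qed.

Lemma Good_mul k l e1 e2 : Good k e1 -> Good l e2 -> Good (k + l) (e1 + e2)%MM.
Proof.
move=> [s1 [hs1 [hy1 [z1 [hz1 E1]]]]] [s2 [hs2 [hy2 [z2 [hz2 E2]]]]].
exists (s1 ++ s2); split; first by rewrite size_cat hs1 hs2.
split; first by move=> y; rewrite mem_cat => /orP [/hy1|/hy2].
exists (z1 + z2); split; first by apply: LamD.
by rewrite val_add E1 E2 big_cat /=; ring.
Qed.

Lemma Good0 e : Good 0 e.
Proof.
exists [::]; split => //; split => //; exists (val e); split; first exact: Lam_val.
by rewrite big_nil addr0.
Qed.

Lemma Good1 e : (Mlam <= W wt e)%N -> Good 1 e.
Proof.
move=> hW; exists [:: val e]; split => //; split.
  move=> y; rewrite mem_seq1 => /eqP ->; split; first exact: Lam_val.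
  have M0 : (0 : rat) < Mlam%:R by rewrite ltr0n Mlam_gt0.
  rewrite -(ler_pM2r M0) mul1r -val_W ler_nat //.
by exists 0; split; [apply: Lam0 | rewrite big_seq1 add0r].
Qed.

Lemma pow_good k f : ideal_pow (I_lambda K lam) k f -> Ow (Good k) f.
Proof.
elim: k f => [|k IH] f /=.
  by apply: Ow_gen; [move=> e e'; apply: Good_up | move=> g _ e _; apply: Good0].
apply: Ow_gen; first by move=> e e'; apply: Good_up.
move=> g [a [b [ha [hb ->]]]].
apply: Ow_weak (OwM (IH _ ha) (Ilam_ge hb)) => e [e1 [e2 [h1 [h2 ->]]]].
by rewrite -addn1; apply: Good_mul => //; apply: Good1.
Qed.

Lemma gen_in_Ilam i : I_lambda K lam ('X_i ^+ lam i).
Proof.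
set g := 'X_i ^+ lam i.
have Jg : J g by apply: gen_sub; exists i.
exists 1%N, (fun _ => - g); split => //; split.
  move=> j /andP [h1 h2]; have -> : j = 1%N by apply/eqP; rewrite eqn_leq h1 h2.
  apply: powN; rewrite -[g]mul1r; apply: pow_mulS => //; exact: pow_one.
by rewrite big_nat1 subnn expr0 mulr1 expr1 subrr.
Qed.


Lemma main_sec : normal_ideal (I_lambda K lam) -> quasinormal (Lambda_mon lam).
Proof.
move=> hnorm x p [c hx] p0 hpx.
pose cm := [multinom c i | i < n].
have vcm : val cm = x by rewrite hx /val; apply: eq_bigr => i _; rewrite mnmE.
have Wcm : (W wt cm = \sum_(i < n) c i * wt i)%N by apply: eq_bigr => i _; rewrite mnmE.
have hint : integral_over_ideal (ideal_pow (I_lambda K lam) p) ('X_[cm] : {mpoly K[n]}).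
  exists Mlam, (fun i => if i == Mlam then - 'X_[cm] ^+ Mlam else 0).
  split; first exact: Mlam_gt0.
  split.
    move=> k _; case: eqP => [->|_]; last exact: pow0.
    apply: powN; apply: pow_pow.
    have -> : ('X_[cm] : {mpoly K[n]}) ^+ Mlam = \prod_(i < n) ('X_i ^+ lam i) ^+ (c i * wt i).
      rewrite mpolyXn mpolyXE_id; apply: eq_bigr => j _.
      by rewrite mulmnE mnmE -exprM -(lam_wt j) mulnCA.
    apply: (@pow_le _ _ _ (\sum_(j < n) c j * wt j)%N).
      rewrite -Wcm -(ler_nat rat) val_W vcm natrM.
      by rewrite ler_pM2r ?ltr0n ?Mlam_gt0.
    by apply: pow_prod => j; apply: pow_exp; apply: gen_in_Ilam.
  rewrite big_nat_recr //=; last exact: Mlam_gt0.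
  rewrite big_nat big1 /=; last first.
    by move=> i /andP [_ hi]; rewrite (ltn_eqF hi) mul0r.
  by rewrite eqxx subnn expr0 mulr1 add0r subrr.
have := pow_good (hnorm p p0 _ hint).
move=> /(_ cm); rewrite msuppX mem_seq1 eqxx => /(_ isT).
move=> [s [hs [hy [z [hz E]]]]].
exists (fun i : 'I_p => nth 0 s i + (if nat_of_ord i == 0%N then z else 0)).
have z0 := Lam_ge0 hz.
split.
  move=> i; have hi : nth 0 s i \in s by rewrite mem_nth // hs.
  have [Ly Ly1] := hy _ hi.
  split; first by apply: LamD => //; case: ifP => _ //; apply: Lam0.
  by case: ifP => _; lra.
rewrite -vcm E big_split /= (big_nth 0) hs big_mkord addrC; congr (_ + _).
clear -p0; case: p p0 => // p _.
by rewrite big_ord_recl /= big1 ?addr0 // => j _.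
Qed.

End Main.

Unset Implicit Arguments.

Theorem lemma4p6 (K : fieldType) (n : nat) (lam : 'I_n -> nat) :
  (forall i, (0 < lam i)%N) ->
  normal_ideal (I_lambda K lam) ->
  quasinormal (Lambda_mon lam).
Proof. by move=> hlam; apply: main_sec. Qed.
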